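(* Let $f:[0,1]\to\mathbb{R}$ be continuous. The following are equivalent: (1) $f$ is completely non-Hölder; (2) for every non-constant polynomial $P\in\mathbb{R}[t]$, there is no point $x_0\in[0,1]$ at which $P\circ f$ has a one-sided (left or right) derivative equal to $0$; (3) for every function $F$ that is real-analytic and non-constant on an open interval containing $f([0,1])$, the function $F\circ f$ is completely non-Hölder.
   Context: For $\alpha>0$, a function $g:[0,1]\to\mathbb{R}$ is called $\alpha$-Hölder at $x_0$ from the right if $\limsup_{y\searrow x_0}\frac{|g(y)-g(x_0)|}{|y-x_0|^\alpha}<\infty$, and $\alpha$-Hölder at $x_0$ from the left if $\limsup_{y\nearrow x_0}\frac{|g(y)-g(x_0)|}{|y-x_0|^\alpha}<\infty$. The function $g$ is called completely non-Hölder if there is no $x_0\in[0,1]$ and no $\alpha>0$ such that $g$ is $\alpha$-Hölder at $x_0$ from the left or from the right. *)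

(* Defs.v *)
From HB Require Import structures.
From mathcomp Require Import all_boot all_order all_algebra.
From mathcomp Require Import all_classical all_reals all_analysis.
Set Implicit Arguments. Unset Strict Implicit. Unset Printing Implicit Defensive.
Import Order.TTheory GRing.Theory Num.Theory.
Import numFieldNormedType.Exports.
Local Open Scope classical_set_scope.
Local Open Scope ring_scope.

Section Defs.
Variable R : realType.

Definition holder_right (g : R -> R) (x0 alpha : R) : Prop :=
  (0 <= x0 < 1) /\
  (exists M : R, \forall y \near (at_right x0),
    (`|g y - g x0| / powR (`|y - x0|) alpha <= M)).

Definition holder_left (g : R -> R) (x0 alpha : R) : Prop :=
  (0 < x0 <= 1) /\
  (exists M : R, \forall y \near (at_left x0),
    (`|g y - g x0| / powR (`|y - x0|) alpha <= M)).

Definition completely_non_holder (g : R -> R) : Prop :=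
  forall x0 alpha : R, x0 \in `[0, 1] -> 0 < alpha ->
    ~ holder_right g x0 alpha /\ ~ holder_left g x0 alpha.

Definition right_deriv_zero (h : R -> R) (x0 : R) : Prop :=
  (0 <= x0 < 1) /\ (fun y => (h y - h x0) / (y - x0)) @ at_right x0 --> 0.

Definition left_deriv_zero (h : R -> R) (x0 : R) : Prop :=
  (0 < x0 <= 1) /\ (fun y => (h y - h x0) / (y - x0)) @ at_left x0 --> 0.

Definition analytic_at (F : R -> R) (a : R) : Prop :=
  exists (r : R) (c : nat -> R), 0 < r /\
    forall x, `|x - a| < r ->
      (fun n : nat => \sum_(0 <= k < n) c k * (x - a) ^+ k) @ \oo --> F x.

Definition in_open_interval (a b : \bar R) (x : R) : Prop :=
  (a < x%:E)%E /\ (x%:E < b)%E.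

End Defs.

(* Main.v *)
Require Import Defs.
From HB Require Import structures.
From mathcomp Require Import all_boot all_order all_algebra.
From mathcomp Require Import all_classical all_reals all_analysis.
From mathcomp Require Import ring lra.
Import Order.TTheory GRing.Theory Num.Theory.
Import numFieldNormedType.Exports.
Local Open Scope classical_set_scope.
Local Open Scope ring_scope.
Section S.
Variable R : realType.

Lemma geom_bound (q : R) (k d : nat) : 0 <= q -> 2 * q <= 1 ->
  \sum_(k <= j < k + d) q ^+ j <= 2 * q ^+ k - 2 * q ^+ (k + d).
Proof.
move=> q0 q2; elim: d => [|d IH]; first by rewrite addn0 big_geq // subrr.
rewrite addnS big_nat_recr /=; last exact: leq_addr.
rewrite (le_trans (lerD IH (lexx _))) // exprS.
have h : 0 <= q ^+ (k + d) := exprn_ge0 _ q0.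
nra.
Qed.

Lemma ps_dich (c : nat -> R) (r : R) (G : R -> R) (t0 : R) :
  0 < r ->
  (forall x, `|x - t0| < r ->
     (fun n : nat => \sum_(0 <= k < n) c k * (x - t0) ^+ k) @ \oo --> G x) ->
  ((forall j, (0 < j)%N -> c j = 0) /\ (forall x, `|x - t0| < r -> G x = G t0))
  \/ (exists (k : nat) (d m M : R), (0 < k)%N /\ 0 < d /\ 0 < m /\
        forall x, `|x - t0| < d ->
          m * `|x - t0| ^+ k <= `|G x - G t0| <= M * `|x - t0| ^+ k).
Proof.
move=> r0 Hs.
have G0 : G t0 = c 0%N.
  have H1 := Hs t0 ltac:(by rewrite subrr normr0).
  have Hc : (fun n : nat => \sum_(0 <= k < n) c k * (t0 - t0) ^+ k) @ \oo --> c 0%N.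
    apply: cvg_near_cst; exists 1%N => // n /= Hn.
    rewrite subrr big_ltn // expr0 mulr1 big_nat_cond big1 ?addr0 // => i /andP[/andP[Hi _] _].
    by rewrite expr0n gtn_eqF // mulr0.
  exact: (cvg_unique _ H1 Hc).
have [Hall|Hex] := pselect (forall j, (0 < j)%N -> c j = 0).
  left; split => // x Hx; rewrite G0.
  have H1 := Hs x Hx.
  have Hc : (fun n : nat => \sum_(0 <= k < n) c k * (x - t0) ^+ k) @ \oo --> c 0%N.
    apply: cvg_near_cst; exists 1%N => // n /= Hn.
    rewrite big_ltn // expr0 mulr1 big_nat_cond big1 ?addr0 // => i /andP[/andP[Hi _] _].
    by rewrite Hall // mul0r.
  exact: (cvg_unique _ H1 Hc).
right.
have Hex' : exists j, (0 < j)%N && (c j != 0).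
  apply: contrapT => H; apply: Hex => j Hj; apply/eqP; apply: contrapT => Hn.
  by apply: H; exists j; rewrite Hj; apply/negP.
case: (ex_minnP Hex') => k /andP[k0 ck0] kmin.
have cz : forall i, (0 < i)%N -> (i < k)%N -> c i = 0.
  move=> i i0 ik; apply/eqP; apply: contraTT ik => Hi.
  by rewrite -leqNgt kmin // i0 Hi.
pose rho := r / 2.
have rho0 : 0 < rho by rewrite /rho divr_gt0.
have Hrho : `|(t0 + rho) - t0| < r.
  rewrite (addrC t0) addrK gtr0_norm // /rho; lra.
have [M0 [_ HM0]] := cvg_seq_bounded (cvgP _ (Hs _ Hrho)).
pose M := `|M0| + 1.
have HM : forall n, `|\sum_(0 <= j < n) c j * ((t0 + rho) - t0) ^+ j| <= M.
  move=> n; apply: (HM0 M) => //; rewrite /M; have := ler_norm M0; lra.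
pose B := 2 * M + 1.
have B0 : 0 < B by rewrite /B /M; have := normr_ge0 M0; lra.
have Hterm : forall j, `|c j| * rho ^+ j <= B.
  move=> j; have := HM j.+1; have := HM j.
  rewrite big_nat_recr //= (addrC t0) addrK.
  set s := \sum_(0 <= i < j) _ => h1 h2.
  have : `|c j * rho ^+ j| <= `|s + c j * rho ^+ j| + `|s|.
    have := ler_normB (s + c j * rho ^+ j) s; by rewrite addrC addKr.
  rewrite normrM normrX (gtr0_norm rho0) /B => h3; lra.
pose K := 2 * B / rho ^+ k.+1.
have K0 : 0 < K by rewrite /K divr_gt0 ?exprn_gt0 //; lra.
have key : forall x, `|x - t0| <= rho / 2 ->
    `|G x - G t0 - c k * (x - t0) ^+ k| <= K * `|x - t0| ^+ k.+1.
  move=> x Hx; set h := x - t0.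
  have Hxr : `|h| < r by rewrite /h; move: Hx; rewrite /rho; have := normr_ge0 h; lra.
  pose q := `|h| / rho.
  have q0 : 0 <= q by rewrite /q divr_ge0 // ltW.
  have q2 : 2 * q <= 1.
    rewrite /q mulrA ler_pdivrMr // mul1r; move: Hx; rewrite ler_pdivlMr //; lra.
  have dec : forall n, (k.+1 <= n)%N -> \sum_(0 <= j < n) c j * h ^+ j =
      c 0%N + c k * h ^+ k + \sum_(k.+1 <= j < n) c j * h ^+ j.
    move=> n kn; rewrite (@big_cat_nat _ _ _ k.+1) //= big_nat_recr //= big_ltn // expr0 mulr1.
    rewrite [X in c 0%N + X + _ + _ = _]big_nat_cond big1 ?addr0 // => i /andP[/andP[i0 ik] _].
    by rewrite cz // mul0r.
  have tail : forall n, (k.+1 <= n)%N ->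
      `|\sum_(k.+1 <= j < n) c j * h ^+ j| <= B * (2 * q ^+ k.+1).
    move=> n kn; apply: (le_trans (ler_norm_sum _ _ _)).
    apply: (le_trans (y := \sum_(k.+1 <= j < n) B * q ^+ j)).
      apply: ler_sum => j _.
      rewrite normrM normrX.
      have -> : `|c j| * `|h| ^+ j = (`|c j| * rho ^+ j) * q ^+ j.
        by rewrite /q (expr_div_n `|h|) -mulrA (mulrC (rho ^+ j)) divfK // expf_neq0 // gt_eqF.
      by apply: ler_wpM2r; [exact: exprn_ge0 | exact: Hterm].
    rewrite -mulr_sumr ler_wpM2l //; first lra.
    have := geom_bound q k.+1 (n - k.+1) q0 q2; rewrite subnKC //.
    have := exprn_ge0 n q0; lra.
  have Hlim := Hs x Hxr.
  rewrite G0.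
  rewrite -addrA -opprD.
  apply: (ler_cvg_to (cvg_norm (cvgB Hlim (cvg_cst (c 0%N + c k * h ^+ k)))) (cvg_cst _)).
  exists k.+1 => // n /= kn.
  rewrite /= -/h; change (`|\sum_(0 <= j < n) c j * h ^+ j - (c 0%N + c k * h ^+ k)| <= K * `|h| ^+ k.+1).
  rewrite dec // (addrC (c 0%N + _)) addrK.
  apply: (le_trans (tail n kn)).
  rewrite /K /q (expr_div_n `|h|) le_eqVlt; apply/orP; left; apply/eqP; ring.
pose d := Num.min (rho / 2) (`|c k| / (2 * K)).
have ck0' : 0 < `|c k| by rewrite normr_gt0.
exists k, d, (`|c k| / 2), (3 * `|c k| / 2); split => //; split.
  by rewrite /d lt_min; apply/andP; split; apply: divr_gt0 => //; lra.
split; first lra.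
move=> x Hx.
have Hx1 : `|x - t0| <= rho / 2 by apply: ltW; apply: lt_le_trans Hx _; rewrite /d ge_min lexx.
have Hx2 : K * `|x - t0| <= `|c k| / 2.
  have : `|x - t0| <= `|c k| / (2 * K) by apply: ltW; apply: lt_le_trans Hx _; rewrite /d ge_min lexx orbT.
  rewrite ler_pdivlMr; last lra.
  move=> h; rewrite ler_pdivlMr //; lra.
have E := key x Hx1.
set a := G x - G t0 in E *; set b := c k * (x - t0) ^+ k in E.
have nb : `|b| = `|c k| * `|x - t0| ^+ k by rewrite /b normrM normrX.
have hk : 0 <= `|x - t0| ^+ k := exprn_ge0 _ (normr_ge0 _).
have E2 : K * `|x - t0| ^+ k.+1 <= `|c k| / 2 * `|x - t0| ^+ k.
  by rewrite exprS mulrA ler_wpM2r.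
have t1 := ler_normD b (a - b); rewrite addrC subrK in t1.
have t2 := ler_normD a (b - a); rewrite addrC subrK (distrC b a) in t2.
have E3 : K * `|x - t0| ^+ k.+1 <= `|b| / 2.
  apply: (le_trans E2); rewrite nb le_eqVlt; apply/orP; left; apply/eqP; ring.
have -> : `|c k| / 2 * `|x - t0| ^+ k = (`|c k| * `|x - t0| ^+ k) / 2 by rewrite mulrAC.
have -> : 3 * `|c k| / 2 * `|x - t0| ^+ k = 3 * (`|c k| * `|x - t0| ^+ k) / 2.
  by ring.
rewrite -nb.
apply/andP; split; lra.
Qed.

End S.
Section S3.
Variable R : realType.

Definition LCp (F : R -> R) (s : R) := exists r : R, 0 < r /\ forall x, `|x - s| < r -> F x = F s.
Definition NDp (F : R -> R) (s : R) := exists (k : nat) (d m M : R), (0 < k)%N /\ 0 < d /\ 0 < m /\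
        forall x, `|x - s| < d -> m * `|x - s| ^+ k <= `|F x - F s| <= M * `|x - s| ^+ k.

Lemma eps_pow (e : R) k : (0 < k)%N -> 0 <= e -> e <= 1 -> e ^+ k <= e.
Proof.
case: k => // k _ e0 e1; rewrite exprS; apply: ler_piMr => //; exact: exprn_ile1.
Qed.

Lemma ND_no_const (F : R -> R) p (sg u C : R) : NDp F p -> (sg = 1 \/ sg = -1) -> 0 < u ->
  (forall e, 0 < e -> e <= u -> F (p - sg * e) = C) -> False.
Proof.
move=> [k [d [m [M [k0 [d0 [m0 HND]]]]]]] Hsg u0 HC.
have nsg : forall y, `|sg * y| = `|y| by move=> y; case: Hsg => ->; rewrite ?mul1r ?mulN1r ?normrN.
have key : forall e, 0 < e -> e <= u -> e < d -> e <= 1 ->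
    m * e ^+ k <= `|C - F p| <= `|M| * e.
  move=> e e0 eu ed e1.
  have := HND (p - sg * e); rewrite (HC e e0 eu) addrAC subrr add0r normrN nsg (gtr0_norm e0) => /(_ ed).
  move=> /andP[h1 h2]; rewrite h1 /=; apply: (le_trans h2).
  apply: (le_trans (ler_wpM2r (exprn_ge0 _ (ltW e0)) (ler_norm M))).
  by apply: ler_wpM2l; [exact: normr_ge0 | apply: eps_pow => //; exact: ltW].
pose D := C - F p.
have [D0|Dn0] := eqVneq D 0.
  pose e := Num.min (Num.min 1 u) (d / 2).
  have e0 : 0 < e by rewrite /e !lt_min ltr01 u0 /=; lra.
  have := key e e0; rewrite -/D D0 normr0.
  have eu : e <= u by rewrite /e !ge_min lexx orbT.
  have ed : e < d by rewrite /e !gt_min; apply/orP; right; lra.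
  have e1 : e <= 1 by rewrite /e !ge_min lexx.
  move=> /(_ eu ed e1) /andP[h1 _].
  have : 0 < m * e ^+ k by apply: mulr_gt0 => //; exact: exprn_gt0.
  lra.
have nD : 0 < `|D| by rewrite normr_gt0.
have nM := normr_ge0 M.
pose e := Num.min (Num.min 1 u) (Num.min (d / 2) (`|D| / (2 * (`|M| + 1)))).
have e0 : 0 < e.
  rewrite /e !lt_min ltr01 u0 /=; apply/andP; split; first lra.
  apply: divr_gt0 => //; lra.
have eu : e <= u by rewrite /e !ge_min lexx orbT.
have ed : e < d by rewrite /e !gt_min; apply/orP; right; apply/orP; left; lra.
have e1 : e <= 1 by rewrite /e !ge_min lexx.
have eD : e * (2 * (`|M| + 1)) <= `|D|.
  rewrite -ler_pdivlMr; last lra.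
  by rewrite /e !ge_min lexx !orbT.
have /andP[_ h2] := key e e0 eu ed e1.
rewrite -/D in h2.
nra.
Qed.


Lemma spread (F : R -> R) (t0 sg L : R) : (sg = 1 \/ sg = -1) -> 0 <= L ->
  (forall w, 0 <= w <= L -> LCp F (t0 + sg * w) \/ NDp F (t0 + sg * w)) ->
  LCp F t0 -> F (t0 + sg * L) = F t0.
Proof.
move=> Hsg L0 H [r0 [r00 Hr0]].
have nsg : forall y, `|sg * y| = `|y| by move=> y; case: Hsg => ->; rewrite ?mul1r ?mulN1r ?normrN.
have [->|Lpos] := eqVneq L 0; first by rewrite mulr0 addr0.
have L0' : 0 < L by rewrite lt_neqAle eq_sym Lpos L0.
pose A := [set s : R | 0 <= s <= L /\ forall w, 0 <= w <= s -> F (t0 + sg * w) = F t0].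
have A0 : A 0.
  split; first by rewrite lexx.
  move=> w /andP[w0 w0']; have -> : w = 0 by apply/eqP; rewrite eq_le w0' w0.
  by rewrite mulr0 addr0.
have ubL : ubound A L by move=> s [/andP[_ ?] _].
have hs : has_sup A by split; [exists 0 | exists L].
set u := sup A.
have uL : u <= L := ge_sup (ex_intro _ 0 A0) ubL.
have u0 : 0 <= u := ub_le_sup (ex_intro _ L ubL) A0.
have below : forall w, 0 <= w -> w < u -> F (t0 + sg * w) = F t0.
  move=> w w0 wu.
  have [s [_ HA] ws] := sup_adherent (eps := u - w) (ltac:(by rewrite subr_gt0)) hs.
  have wlt : w < s by move: ws; rewrite -/u opprB addrCA subrr addr0.
  by apply: HA; rewrite w0 ltW.
have upos : 0 < u.
  pose s := Num.min L (r0 / 2).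
  have s0 : 0 < s by rewrite /s lt_min L0' /=; lra.
  have As : A s.
    split; first by rewrite ltW //= /s ge_min lexx.
    move=> w /andP[w0 ws]; apply: Hr0.
    rewrite (addrC t0) addrK nsg ger0_norm //.
    have : s <= r0 / 2 by rewrite /s ge_min lexx orbT.
    lra.
  exact: (lt_le_trans s0 (ub_le_sup (ex_intro _ L ubL) As)).
pose p := t0 + sg * u.
have LCu : LCp F p.
  case: (H u); first by rewrite u0 uL.
    by [].
  move=> HND; exfalso; apply: (@ND_no_const F p sg u (F t0) HND Hsg upos).
  move=> e e0 eu.
  have [->|en] := eqVneq e u.
    by rewrite /p addrK.
  have -> : p - sg * e = t0 + sg * (u - e) by rewrite /p mulrBr addrA.
  apply: below; first lra.
  lra.
case: LCu => r' [r'0 Hr'].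
have Fp : F p = F t0.
  pose w := u - Num.min u r' / 2.
  have hm : 0 < Num.min u r' by rewrite lt_min upos.
  have hmu : Num.min u r' <= u by rewrite ge_min lexx.
  have hmr : Num.min u r' <= r' by rewrite ge_min lexx orbT.
  rewrite -(below w); [|rewrite /w; lra|rewrite /w; lra].
  symmetry; apply: Hr'.
  rewrite /p opprD addrACA subrr add0r -mulrBr nsg /w.
  rewrite addrAC subrr add0r normrN gtr0_norm; lra.
have uLeq : u = L.
  apply/eqP; rewrite eq_le uL /=; rewrite leNgt; apply/negP => uLt.
  pose s' := Num.min L (u + r' / 2).
  have As' : A s'.
    split.
      rewrite ge_min lexx /= andbT; rewrite le_min L0 /=; lra.
    move=> w /andP[w0 ws'].
    have [wu|uw] := ltP w u; first exact: below.
    rewrite -Fp; apply: Hr'.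
    rewrite /p opprD addrACA subrr add0r -mulrBr nsg.
    have : s' <= u + r' / 2 by rewrite /s' ge_min lexx orbT.
    rewrite ger0_norm; lra.
  have := ub_le_sup (ex_intro _ L ubL) As'; rewrite -/u.
  have : u < s' by rewrite /s' lt_min uLt /=; lra.
  lra.
by rewrite -uLeq.
Qed.


Lemma analytic_dich (F : R -> R) s : analytic_at F s -> LCp F s \/ NDp F s.
Proof.
case=> r [c [r0 Hc]]; case: (@ps_dich R c r F s r0 Hc) => [[_ H]|H].
  by left; exists r.
by right.
Qed.

Lemma oi_between (a b : \bar R) x y w : in_open_interval a b x -> in_open_interval a b y ->
  x <= w -> w <= y -> in_open_interval a b w.
Proof.
move=> [ax _] [_ yb] xw wy; split.
  by apply: (lt_le_trans ax); rewrite lee_fin.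
by apply: (le_lt_trans _ yb); rewrite lee_fin.
Qed.

Lemma analytic_ND (F : R -> R) (a b : \bar R) t0 :
  (forall x, in_open_interval a b x -> analytic_at F x) ->
  (exists x y, in_open_interval a b x /\ in_open_interval a b y /\ F x != F y) ->
  in_open_interval a b t0 -> NDp F t0.
Proof.
move=> HA [x [y [Hx [Hy Fxy]]]] Ht0.
case: (@analytic_dich F t0 (HA _ Ht0)) => // HLC.
have allc : forall z, in_open_interval a b z -> F z = F t0.
  move=> z Hz.
  have [tz|zt] := leP t0 z.
    have := @spread F t0 1 (z - t0) (or_introl erefl).
    rewrite mul1r (addrC t0) subrK; apply => //; first by rewrite subr_ge0.
    move=> w /andP[w0 wL]; apply: analytic_dich; apply: HA.
    apply: (@oi_between a b t0 z _ Ht0 Hz); rewrite mul1r; lra.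
  have := @spread F t0 (-1) (t0 - z) (or_intror erefl).
  have -> : t0 + -1 * (t0 - z) = z by ring.
  apply => //; first by rewrite subr_ge0 ltW.
  move=> w /andP[w0 wL]; apply: analytic_dich; apply: HA.
  apply: (@oi_between a b z t0 _ Hz Ht0); rewrite mulN1r; lra.
by move/eqP: Fxy; rewrite (allc x Hx) (allc y Hy).
Qed.

End S3.
Section S4.
Variable R : realType.

Lemma poly_ND (P : {poly R}) t0 : (1 < size P)%N -> @NDp R (fun x => P.[x]) t0.
Proof.
move=> sP.
pose Q := P \Po ('X + t0%:P).
have sQ : size Q = size P by rewrite size_comp_poly2 // size_XaddC.
have Hc : forall x, `|x - t0| < 1 ->
   (fun n : nat => \sum_(0 <= k < n) Q`_k * (x - t0) ^+ k) @ \oo --> (fun x => P.[x]) x.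
  move=> x _; apply: cvg_near_cst; exists (size Q) => // n /= Hn.
  rewrite (@big_cat_nat _ _ _ (size Q)) //= [X in _ + X]big_nat_cond [X in _ + X]big1 ?addr0; last first.
    by move=> i /andP[/andP[Hi _] _]; rewrite nth_default // mul0r.
  have -> : P.[x] = Q.[x - t0] by rewrite horner_comp !hornerE subrK.
  by rewrite horner_coef big_mkord.
case: (@ps_dich R (fun k => Q`_k) 1 (fun x => P.[x]) t0 ltr01 Hc) => [[Hall _]|//].
exfalso.
have Q0 : Q != 0 by rewrite -size_poly_eq0 sQ; case: (size P) sP.
have := Hall (size Q).-1; rewrite -lead_coefE => /(_ _) /eqP.
rewrite lead_coef_eq0 (negbTE Q0) => H; have //: false; apply: H.
by rewrite sQ; case: (size P) sP => [|[|n]].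
Qed.

End S4.
Section S5.
Variable R : realType.

Lemma transfer (Fl : set_system R) (PF : ProperFilter Fl) (f G : R -> R) x0 (alpha : R)
  (k : nat) (d m M : R) :
  (0 < k)%N -> 0 < d -> 0 < m ->
  (forall t, `|t - f x0| < d -> m * `|t - f x0| ^+ k <= `|G t - G (f x0)|) ->
  f @ Fl --> f x0 ->
  (\forall y \near Fl, y != x0) ->
  (\forall y \near Fl, `|G (f y) - G (f x0)| / powR `|y - x0| alpha <= M) ->
  exists M' : R, \forall y \near Fl, `|f y - f x0| / powR `|y - x0| (alpha / k%:R) <= M'.
Proof.
move=> k0 d0 m0 HND Hcvg Hne HM.
move/cvgrPdist_lt: Hcvg => /(_ d d0) Hd.
exists (Num.max 1 (M / m)).
near=> y.
have yx : y != x0 by near: y.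
have hM : `|G (f y) - G (f x0)| / powR `|y - x0| alpha <= M by near: y.
have hd : `|f x0 - f y| < d by near: y.
set z := `|y - x0|; set A := `|f y - f x0|; set P := powR z (alpha / k%:R).
have z0 : 0 < z by rewrite /z normr_gt0 subr_eq0.
have P0 : 0 < P by rewrite /P powR_gt0.
have Pk : P ^+ k = powR z alpha.
  rewrite /P -powR_mulrn ?powR_ge0 // -powRrM mulfVK // pnatr_eq0 -lt0n //.
rewrite -Pk in hM.
have h1 := HND (f y) ltac:(by rewrite distrC).
have h2 : m * A ^+ k <= M * P ^+ k.
  apply: (le_trans h1); rewrite -ler_pdivrMr //; exact: exprn_gt0.
have h3 : (A / P) ^+ k <= M / m.
  rewrite expr_div_n ler_pdivrMr ?exprn_gt0 // mulrAC ler_pdivlMr //.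
  by rewrite mulrC.
have [h4|h4] := leP (A / P) 1.
  by rewrite le_max h4.
rewrite le_max; apply/orP; right; apply: le_trans h3.
by apply: ler_eXnr => //; exact: ltW.
Unshelve. all: by end_near.
Qed.

End S5.
Section S6.
Variable R : realType.

Lemma cont_right (f : R -> R) x0 : {within `[0, 1], continuous f} -> 0 <= x0 < 1 ->
  f @ x0^'+ --> f x0.
Proof.
move=> /(continuous_within_itvP _ ltr01) [Hin H0 _] /andP[].
rewrite le_eqVlt => /orP[/eqP <-|x00 x01] //.
apply: cvg_at_right_filter; apply: Hin; by rewrite in_itv /= x00 x01.
Qed.

Lemma cont_left (f : R -> R) x0 : {within `[0, 1], continuous f} -> 0 < x0 <= 1 ->
  f @ x0^'- --> f x0.
Proof.
move=> /(continuous_within_itvP _ ltr01) [Hin _ H1] /andP[x00].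
rewrite le_eqVlt => /orP[/eqP ->|x01] //.
apply: cvg_at_left_filter; apply: Hin; by rewrite in_itv /= x00 x01.
Qed.

Lemma right_small x0 (e : R) : 0 < e -> \forall y \near x0^'+, 0 < `|y - x0| < e.
Proof.
move=> e0; near=> y.
have h1 : x0 < y by near: y; exact: nbhs_right_gt.
have h2 : y - x0 < e by near: y; exact: nbhs_right_ltDr.
by rewrite gtr0_norm ?subr_gt0 ?h1 ?h2.
Unshelve. all: by end_near.
Qed.

Lemma left_small x0 (e : R) : 0 < e -> \forall y \near x0^'-, 0 < `|y - x0| < e.
Proof.
move=> e0; near=> y.
have h1 : y < x0 by near: y; exact: nbhs_left_lt.
have h2 : x0 - y < e by near: y; exact: nbhs_left_ltBl.
by rewrite distrC gtr0_norm ?subr_gt0 ?h1 ?h2.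
Unshelve. all: by end_near.
Qed.

Lemma deriv0_holder1 (Fl : set_system R) (PF : ProperFilter Fl) (h : R -> R) x0 :
  (\forall y \near Fl, y != x0) ->
  (fun y => (h y - h x0) / (y - x0)) @ Fl --> 0 ->
  exists M : R, \forall y \near Fl, `|h y - h x0| / powR `|y - x0| 1 <= M.
Proof.
move=> Hne /cvgrPdist_lt /(_ 1 ltr01) H1.
exists 1; near=> y.
have yx : y != x0 by near: y.
have hy : `|0 - (h y - h x0) / (y - x0)| < 1 by near: y.
rewrite powRr1 // -normrV ?unitfE ?subr_eq0 // -normrM.
by rewrite sub0r normrN in hy; exact: ltW.
Unshelve. all: by end_near.
Qed.

Lemma holder_deriv0 (Fl : set_system R) (PF : ProperFilter Fl) (g : R -> R) x0 alpha M (n : nat) :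
  0 < alpha -> 2 <= n%:R * alpha ->
  (forall e, 0 < e -> \forall y \near Fl, 0 < `|y - x0| < e) ->
  (\forall y \near Fl, `|g y - g x0| / powR `|y - x0| alpha <= M) ->
  (fun y => (g y - g x0) ^+ n / (y - x0)) @ Fl --> 0.
Proof.
move=> a0 na Hsmall HM.
apply/cvgrPdist_lt => eps eps0.
pose C := `|M| ^+ n + 1.
have C0 : 0 < C by rewrite /C; have := exprn_ge0 n (normr_ge0 M); lra.
have e0 : 0 < Num.min 1 (eps / C) by rewrite lt_min ltr01 divr_gt0.
near=> y.
have /andP[z0 ze] : 0 < `|y - x0| < Num.min 1 (eps / C) by near: y; exact: Hsmall.
have hM : `|g y - g x0| / powR `|y - x0| alpha <= M by near: y.
set z := `|y - x0| in z0 ze hM *.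
have z1 : z <= 1 by apply: ltW; apply: lt_le_trans ze _; rewrite ge_min lexx.
have zeC : z < eps / C by apply: lt_le_trans ze _; rewrite ge_min lexx orbT.
have pz : 0 < powR z alpha by rewrite powR_gt0.
have hA : `|g y - g x0| <= `|M| * powR z alpha.
  rewrite -ler_pdivrMr //; apply: (le_trans hM); exact: ler_norm.
have hAn : `|g y - g x0| ^+ n <= `|M| ^+ n * powR z (n%:R * alpha).
  rewrite (mulrC n%:R) powRrM powR_mulrn ?powR_ge0 // -exprMn.
  by apply: lerXn2r; rewrite ?nnegrE ?normr_ge0 ?mulr_ge0 ?powR_ge0.
have hp : powR z (n%:R * alpha) <= z ^+ 2.
  rewrite -(powR_mulrn 2 (ltW z0)); apply: (ger_powR _ na); by rewrite z0 z1.
rewrite sub0r normrN normrM normrV; last by rewrite unitfE -normr_eq0 -/z gt_eqF.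
rewrite normrX -/z.
rewrite ltr_pdivrMr //.
apply: (le_lt_trans hAn).
have : `|M| ^+ n * powR z (n%:R * alpha) <= `|M| ^+ n * z ^+ 2.
  apply: ler_wpM2l => //; exact: exprn_ge0.
have : z ^+ 2 = z * z by rewrite expr2.
have : `|M| ^+ n * z < eps.
  rewrite ltr_pdivlMr // in zeC.
  have : `|M| ^+ n * z <= z * C by rewrite mulrC /C mulrDr mulr1; have := ltW z0; lra.
  lra.
move=> h1 h2 h3; rewrite h2 in h3.
have : `|M| ^+ n * (z * z) = (`|M| ^+ n * z) * z by rewrite mulrA.
move=> h4; rewrite h4 in h3.
have : (`|M| ^+ n * z) * z < eps * z by rewrite ltr_pM2r.
lra.
Unshelve. all: by end_near.
Qed.

End S6.
Lemma analytic_id (R : realType) (x : R) : analytic_at id x.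
Proof.
exists 1, (fun k => if k == 0%N then x else if k == 1%N then 1 else 0); split; first exact: ltr01.
move=> y _.
apply: cvg_near_cst; exists 2%N; first by [].
move=> n Hn.
change (\sum_(0 <= k < n) (if k == 0%N then x else if k == 1%N then 1 else 0) * (y - x) ^+ k = y).
have Hn2 : (1 < n)%N := Hn.
rewrite big_ltn; last exact: ltnW.
rewrite big_ltn //.
rewrite big_nat_cond big1 ?addr0 /=.
  by rewrite expr0 expr1 mulr1 mul1r addrC subrK.
by move=> i /andP[/andP[Hi _] _]; case: i Hi => [|[|i]] //= _; rewrite mul0r.
Qed.

Theorem mainTheorem1 (R : realType) (f : R -> R) :
  {within `[0, 1], continuous f} ->
  (completely_non_holder f <->
     (forall p : {poly R}, (1 < size p)%N ->
        forall x0 : R, x0 \in `[0, 1] ->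
          ~ right_deriv_zero (fun x => p.[f x]) x0 /\
          ~ left_deriv_zero (fun x => p.[f x]) x0))
  /\
  (completely_non_holder f <->
     (forall (F : R -> R) (a b : \bar R),
        (forall x, x \in `[0, 1] -> in_open_interval a b (f x)) ->
        (forall x, in_open_interval a b x -> analytic_at F x) ->
        (exists x y, in_open_interval a b x /\ in_open_interval a b y /\ F x != F y) ->
        completely_non_holder (F \o f))).
Proof.
move=> Hf.
have A1 : completely_non_holder f -> (forall p : {poly R}, (1 < size p)%N ->
        forall x0 : R, x0 \in `[0, 1] ->
          ~ right_deriv_zero (fun x => p.[f x]) x0 /\
          ~ left_deriv_zero (fun x => p.[f x]) x0).
  move=> Hc P sP x0 Hx0.
  have [k [d [m [M' [k0 [d0 [m0 HND]]]]]]] := poly_ND R P (f x0) sP.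
  have HND' : forall t, `|t - f x0| < d -> m * `|t - f x0| ^+ k <= `|P.[t] - P.[f x0]|.
    by move=> t /HND /andP[].
  have ak : (0 : R) < 1 / k%:R by apply: divr_gt0; rewrite ?ltr0n.
  have [H1 H2] := Hc x0 (1 / k%:R) Hx0 ak.
  split.
    move=> [hx0 Hd].
    have [M HM] := deriv0_holder1 R _ (at_right_proper_filter x0) (fun x => P.[f x]) x0 (nbhs_right_neq x0) Hd.
    have [M2 HM2] := transfer R _ (at_right_proper_filter x0) f (fun t => P.[t]) x0 1 k d m M k0 d0 m0 HND' (cont_right R f x0 Hf hx0) (nbhs_right_neq x0) HM.
    by apply: H1; split => //; exists M2.
  move=> [hx0 Hd].
  have [M HM] := deriv0_holder1 R _ (at_left_proper_filter x0) (fun x => P.[f x]) x0 (nbhs_left_neq x0) Hd.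
  have [M2 HM2] := transfer R _ (at_left_proper_filter x0) f (fun t => P.[t]) x0 1 k d m M k0 d0 m0 HND' (cont_left R f x0 Hf hx0) (nbhs_left_neq x0) HM.
  by apply: H2; split => //; exists M2.
have A2 : (forall p : {poly R}, (1 < size p)%N ->
        forall x0 : R, x0 \in `[0, 1] ->
          ~ right_deriv_zero (fun x => p.[f x]) x0 /\
          ~ left_deriv_zero (fun x => p.[f x]) x0) -> completely_non_holder f.
  move=> H2 x0 alpha Hx0 a0.
  pose n := (Num.truncn (2 / alpha)).+1.
  have Hn : 2 <= n%:R * alpha.
    have := truncnS_gt (2 / alpha); rewrite -/n ltr_pdivrMr // => h; exact: ltW.
  pose P := ('X - (f x0)%:P) ^+ n.
  have sP : (1 < size P)%N by rewrite size_exp_XsubC.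
  have [Hr Hl] := H2 P sP x0 Hx0.
  have Pe : forall t, P.[t] = (t - f x0) ^+ n by move=> t; rewrite /P horner_exp hornerXsubC.
  have Pfun : (fun y => (P.[f y] - P.[f x0]) / (y - x0)) = (fun y => (f y - f x0) ^+ n / (y - x0)).
    by apply: funext => y; rewrite !Pe subrr expr0n /= subr0.
  split.
    move=> [hx0 [M HM]]; apply: Hr; split => //; rewrite Pfun.
    exact: (holder_deriv0 R _ (at_right_proper_filter x0) f x0 alpha M n a0 Hn (fun e e0 => right_small R x0 e e0) HM).
  move=> [hx0 [M HM]]; apply: Hl; split => //; rewrite Pfun.
  exact: (holder_deriv0 R _ (at_left_proper_filter x0) f x0 alpha M n a0 Hn (fun e e0 => left_small R x0 e e0) HM).
have A3 : completely_non_holder f -> (forall (F : R -> R) (a b : \bar R),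
        (forall x, x \in `[0, 1] -> in_open_interval a b (f x)) ->
        (forall x, in_open_interval a b x -> analytic_at F x) ->
        (exists x y, in_open_interval a b x /\ in_open_interval a b y /\ F x != F y) ->
        completely_non_holder (F \o f)).
  move=> Hc F a b Hab HA Hne x0 alpha Hx0 a0.
  have [k [d [m [M' [k0 [d0 [m0 HND]]]]]]] := analytic_ND R F a b (f x0) HA Hne (Hab x0 Hx0).
  have HND' : forall t, `|t - f x0| < d -> m * `|t - f x0| ^+ k <= `|F t - F (f x0)|.
    by move=> t /HND /andP[].
  have ak : (0 : R) < alpha / k%:R by apply: divr_gt0; rewrite ?ltr0n.
  have [H1 H2] := Hc x0 (alpha / k%:R) Hx0 ak.
  split.
    move=> [hx0 [M HM]]; apply: H1; split => //.
    exact: (transfer R _ (at_right_proper_filter x0) f F x0 alpha k d m M k0 d0 m0 HND' (cont_right R f x0 Hf hx0) (nbhs_right_neq x0) HM).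
  move=> [hx0 [M HM]]; apply: H2; split => //.
  exact: (transfer R _ (at_left_proper_filter x0) f F x0 alpha k d m M k0 d0 m0 HND' (cont_left R f x0 Hf hx0) (nbhs_left_neq x0) HM).
have A4 : (forall (F : R -> R) (a b : \bar R),
        (forall x, x \in `[0, 1] -> in_open_interval a b (f x)) ->
        (forall x, in_open_interval a b x -> analytic_at F x) ->
        (exists x y, in_open_interval a b x /\ in_open_interval a b y /\ F x != F y) ->
        completely_non_holder (F \o f)) -> completely_non_holder f.
  move=> H3; apply: (H3 id -oo%E +oo%E).
  - by move=> x _; split; [exact: ltNyr | exact: ltry].
  - move=> x _; exact: analytic_id.
  - exists 0, 1; split; first by split; [exact: ltNyr | exact: ltry].
    split; first by split; [exact: ltNyr | exact: ltry].
    by rewrite /= eq_sym oner_eq0.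
by split; split.
Qed.
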